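(* Let $G$ be a finite group of odd order and $\alpha$ an automorphism of $G$. Then $|\{g\in G:\alpha(g)=g^3\}|\leq[G:\mathrm{fix}(\alpha)]$, where $\mathrm{fix}(\alpha)=\{g\in G:\alpha(g)=g\}$. In particular, if $|\{g\in G:\alpha(g)=g^3\}|=\rho|G|$ with $\rho>0$, then $|\mathrm{fix}(\alpha)|\leq\rho^{-1}$. *)

(* Defs.v *)
From HB Require Import structures.
From mathcomp Require Import all_boot all_order all_algebra all_fingroup.
Set Implicit Arguments. Unset Strict Implicit. Unset Printing Implicit Defensive.

Definition fixAut (gT : finGroupType) (G : {set gT}) (a : {perm gT}) : {set gT} :=
  [set g in G | a g == g].

Definition cubeAut (gT : finGroupType) (G : {set gT}) (a : {perm gT}) : {set gT} :=
  [set g in G | a g == (g ^+ 3)%g].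

(* Main.v *)
Require Import Defs.
From HB Require Import structures.
From mathcomp Require Import all_boot all_order all_algebra all_fingroup.
From mathcomp Require Import cyclic zify.
Import Order.TTheory GRing.Theory Num.Theory.

Theorem mainTheorem7 (gT : finGroupType) (G : {group gT}) (a : {perm gT}) :
  odd #|G| -> a \in Aut G ->
  (#|cubeAut G a| <= #|G : (fixAut G a)|%g)%N /\
  (forall rho : rat, (0 < rho)%R ->
     (#|cubeAut G a|%:R = rho * #|G|%:R :> rat)%R ->
     (#|fixAut G a|%:R <= rho^-1 :> rat)%R).
Proof.
move=> oddG aut.
have aM := morphicP (Aut_morphic aut).
have aG := Aut_closed aut.
have a1 : a 1%g = 1%g.
  have := aM 1%g 1%g (group1 G) (group1 G).
  by rewrite mulg1 => /esym/(canRL (mulKg _)); rewrite mulVg.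
have Fgrp : group_set (fixAut G a).
  apply/group_setP; split; first by rewrite inE group1 a1 eqxx.
  move=> x y; rewrite !inE => /andP[xG /eqP ax] /andP[yG /eqP ay].
  by rewrite groupM // aM // ax ay eqxx.
pose F := Group Fgrp.
have FG : F \subset G by apply/subsetP=> x; rewrite inE => /andP[].
pose phi := fun g : gT => (g^-1 * a g)%g.
have part1 : (#|cubeAut G a| <= #|G : F|%g)%N.
  have inj : {in cubeAut G a &, injective phi}.
    have sq : forall g, g \in cubeAut G a -> phi g = (g ^+ 2)%g.
      move=> g; rewrite /phi inE => /andP[_ /eqP ->].
      by rewrite expgS mulKg.
    have rt : forall g, g \in G -> g = ((g ^+ 2) ^+ (#|G|./2).+1)%g.
      move=> g gG; rewrite -expgM.
      have -> : (2 * (#|G|./2).+1 = #|G|.+1)%N.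
        have := odd_double_half #|G|; rewrite oddG -muln2; lia.
      by rewrite expgSr expg_cardG // mul1g.
    move=> g h gC hC e.
    have gG : g \in G by move: gC; rewrite inE => /andP[].
    have hG : h \in G by move: hC; rewrite inE => /andP[].
    by rewrite (rt g gG) (rt h hG) -(sq g gC) -(sq h hC) e.
  rewrite -(card_in_imset inj).
  pose psi := fun C : {set gT} => phi (repr C).
  apply: (leq_trans _ (leq_imset_card psi (rcosets F G))).
  apply: subset_leq_card; apply/subsetP => _ /imsetP[g gC ->].
  have gG : g \in G by move: gC; rewrite inE => /andP[].
  apply/imsetP; exists (F :* g)%g; first by apply/rcosetsP; exists g.
  rewrite /psi; case: repr_rcosetP => f fF.
  move: fF; rewrite inE => /andP[fG /eqP af].
  by rewrite /phi aM // af invMg -mulgA mulKg.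
split=> // rho rho0 e.
have L := Lagrange FG.
have G0 : (0 < #|G|)%N by rewrite cardG_gt0.
move/(leq_mul (leqnn #|F|)): part1; rewrite L => le.
have : (#|F|%:R * (rho * #|G|%:R) <= #|G|%:R :> rat)%R.
  by rewrite -e -natrM ler_nat.
rewrite mulrA -[X in (_ <= X)%R]mul1r ler_pM2r ?ltr0n // => h.
by rewrite -div1r ler_pdivlMr.
Qed.
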